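(* For all $0<b<B\le1$ and every integer $n\ge2$, letting $k=\min\big(\lfloor 1/b+1/2\rfloor,\ \lceil 2B/b\rceil-1,\ n\big)$, $$\max\Big(2-b,\ \frac{k\,(2-k b)}{2-b}\Big)\le\textsc{PoF-Profit-Submodular}(b,B)\le\min\big(\lceil 2B/b\rceil-1,\,n\big).$$
   Context: An instance $\langle A,f,c\rangle$ consists of a finite set $A$ of agents, a monotone nondecreasing $f:2^A\to[0,1]$, and costs $c_i\ge0$. For $S\subseteq A$, $i\in S$: $f_S(i)=f(S)-f(S\setminus\{i\})$; $p(S)=\sum_{i\in S}c_i/f_S(i)$ (conventions: $0$ if $c_i=0=f_S(i)$, $\infty$ if $c_i>0=f_S(i)$); the profit is $g(S)=(1-p(S))f(S)$. $f$ is submodular if $f_S(i)\ge f_{S'}(i)$ whenever $S\subseteq S'$, $i\in S$. $\textsc{Max-Profit}(B)=\max\{g(S):p(S)\le B\}$. $\textsc{PoF-Profit-Submodular}(b,B)$ is the supremum of $\textsc{Max-Profit}(B)/\textsc{Max-Profit}(b)$ over all instances with submodular $f$, at most $n$ agents, and $\max_{i\in A}p(\{i\})\le b$. *)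

(* Defs.v *)
From HB Require Import structures.
From mathcomp Require Import all_boot all_order all_algebra.
From mathcomp Require Import all_classical all_reals.
From mathcomp Require Import ereal.
Set Implicit Arguments. Unset Strict Implicit. Unset Printing Implicit Defensive.
Import Order.TTheory GRing.Theory Num.Theory.
Local Open Scope ring_scope.

Section Defs.
Variable R : realType.
Variable A : finType.

Definition marg (f : {set A} -> R) (S : {set A}) (i : A) : R :=
  f S - f (S :\ i).

Definition pterm (f : {set A} -> R) (c : A -> R) (S : {set A}) (i : A) : \bar R :=
  if marg f S i == 0 then (if c i == 0 then 0%E else +oo%E)
  else (c i / marg f S i)%:E.

Definition pay (f : {set A} -> R) (c : A -> R) (S : {set A}) : \bar R :=
  (\sum_(i in S) pterm f c S i)%E.

(* profit g(S) = (1 - p(S)) f(S); only used for S with finite p(S) *)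
Definition profit (f : {set A} -> R) (c : A -> R) (S : {set A}) : R :=
  (1 - fine (pay f c S)) * f S.

(* Max-Profit(B) = max { g(S) : p(S) <= B }.  The empty set is always
   feasible with g(emptyset) = f(emptyset) >= 0, so using 0 as the neutral
   element of the max does not change the value. *)
Definition max_profit (f : {set A} -> R) (c : A -> R) (B : R) : R :=
  \big[Num.max/0]_(S : {set A} | (pay f c S <= B%:E)%E) profit f c S.

Definition monotone_set_fun (f : {set A} -> R) : Prop :=
  forall S T : {set A}, S \subset T -> f S <= f T.

Definition submodular (f : {set A} -> R) : Prop :=
  forall (S S' : {set A}) (i : A), S \subset S' -> i \in S ->
    marg f S' i <= marg f S i.

Definition valid_instance (n : nat) (b : R) (f : {set A} -> R) (c : A -> R) : Prop :=
  (#|A| <= n)%N /\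
  [/\ (forall S, 0 <= f S <= 1),
      monotone_set_fun f,
      submodular f,
      (forall i, 0 <= c i) &
      (forall i, (pay f c [set i] <= b%:E)%E)].
End Defs.

Definition pof_profit_submodular (R : realType) (n : nat) (b B : R) : \bar R :=
  ereal_sup [set r : \bar R | exists (A : finType) (f : {set A} -> R) (c : A -> R),
     valid_instance n b f c /\ r = (max_profit f c B / max_profit f c b)%:E].

(* Main.v *)
Require Import Defs.
From HB Require Import structures.
From mathcomp Require Import all_boot all_order all_algebra.
From mathcomp Require Import all_classical all_reals.
From mathcomp Require Import ereal.
From mathcomp Require Import ring lra.
From mathcomp Require Import fintype finset.
Import Order.TTheory GRing.Theory Num.Theory.
Local Open Scope ring_scope.
Set Implicit Arguments. Unset Strict Implicit. Unset Printing Implicit Defensive.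

Lemma count_alg (R : realType) (S M x b : R) : M * b < 2 * S -> M * b < S + M * x -> 2 <= M ->
  (M + 1) * b < 2 * (S + x).
Proof. move=> h1 h2 hM; nra. Qed.

Lemma count_pw (R : realType) (s : nat -> R) (b : R) (m : nat) : (2 <= m)%N ->
  (forall j k, (j < m)%N -> (k < m)%N -> j != k -> b < s j + s k) ->
  m%:R * b < 2 * \sum_(j < m) s j.
Proof.
elim: m => [//|m IH] hm hpw.
rewrite big_ord_recr /=.
case: (ltnP m 2) => m2.
  have e1 : m = 1%N by apply/eqP; rewrite eqn_leq -ltnS m2 -ltnS hm.
  subst m; rewrite big_ord1 /=.
  have := hpw 0%N 1%N isT isT isT; lra.
have h1 := IH m2 (fun j k jm km => hpw j k (ltnW jm) (ltnW km)).
have h2 : \sum_(j < m) b < \sum_(j < m) (s j + s m).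
  apply: ltr_sum; first by apply/hasP; exists (Ordinal (ltnW m2)) => //; rewrite mem_index_enum.
  move=> j _; apply: hpw; [exact: (ltnW (ltn_ord j)) | by [] | by rewrite neq_ltn ltn_ord].
rewrite big_split /= !sumr_const card_ord in h2.
rewrite -[b *+ m]mulr_natl -[s m *+ m]mulr_natl in h2.
have hM : 2 <= m%:R :> R by rewrite (ler_nat R 2 m).
rewrite mulrSr; exact: (count_alg h1 h2 hM).
Qed.


Section UB.
Variables (R : realType) (A : finType) (f : {set A} -> R) (c : A -> R).
Hypothesis hmono : monotone_set_fun f.
Hypothesis hsub : submodular f.
Hypothesis hc : forall i, 0 <= c i.

Lemma marg_ge0 (S : {set A}) i : 0 <= marg f S i.
Proof. rewrite /marg subr_ge0; apply: hmono; exact: subD1set. Qed.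

Lemma pterm_ge0 (S : {set A}) i : (0 <= pterm f c S i)%E.
Proof.
rewrite /pterm; case: eqP => _; first by case: eqP.
by rewrite lee_fin divr_ge0 // marg_ge0.
Qed.

Lemma pay_ge0 (S : {set A}) : (0 <= pay f c S)%E.
Proof. by apply: sume_ge0 => i _; exact: pterm_ge0. Qed.

Lemma pterm_mono (G S : {set A}) i : G \subset S -> i \in G ->
  (pterm f c G i <= pterm f c S i)%E.
Proof.
move=> GS iG; have hm := hsub GS iG.
have h0 := marg_ge0 S i.
rewrite /pterm; case: (marg f S i =P 0) => [_|mS].
  case: (c i =P 0) => [ci0|_]; last exact: leey.
  case: eqP => _ //=.
  by rewrite ci0 mul0r.
have mS0 : 0 < marg f S i by rewrite lt_neqAle eq_sym; apply/andP; split => //; apply/eqP.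
have mG0 : 0 < marg f G i by exact: lt_le_trans hm.
rewrite (gt_eqF mG0) lee_fin; apply: ler_wpM2l => //.
by rewrite lef_pV2 // posrE.
Qed.


Lemma pterm_le_pay (S : {set A}) i : i \in S -> (pterm f c S i <= pay f c S)%E.
Proof.
move=> iS; rewrite /pay (bigD1 i) //=.
rewrite -{1}(adde0 (pterm f c S i)); apply: leeD2l.
by apply: sume_ge0 => j _; exact: pterm_ge0.
Qed.

Lemma pterm_fin (S : {set A}) (x : R) i : (pay f c S <= x%:E)%E -> i \in S ->
  pterm f c S i = (fine (pterm f c S i))%:E.
Proof.
move=> hx iS; have h1 := le_trans (pterm_le_pay iS) hx.
have h0 := pterm_ge0 S i.
by move: h1 h0; case: (pterm f c S i).
Qed.

Lemma sum_sub_le (G S : {set A}) (F : A -> R) : G \subset S -> (forall i, 0 <= F i) ->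
  \sum_(i in G) F i <= \sum_(i in S) F i.
Proof.
move=> GS F0; rewrite [X in _ <= X](big_setID G) /= (finset.setIidPr GS) -{1}(addr0 (\sum_(i in G) F i)).
by rewrite lerD2l; apply: sumr_ge0.
Qed.

Variable (S0 : {set A}) (B0 : R).
Hypothesis hS0 : (pay f c S0 <= B0%:E)%E.
Let t i := fine (pterm f c S0 i).

Lemma t_ge0 i : 0 <= t i.
Proof. exact: fine_ge0 (pterm_ge0 _ _). Qed.

Lemma payS0 : pay f c S0 = (\sum_(i in S0) t i)%:E.
Proof.
rewrite -sumEFin /pay; apply: eq_bigr => i iS; exact: pterm_fin hS0 iS.
Qed.

Lemma payG (G : {set A}) : G \subset S0 -> (pay f c G <= (\sum_(i in G) t i)%:E)%E.
Proof.
move=> GS; rewrite -sumEFin /pay; apply: lee_sum => i iG.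
rewrite -(pterm_fin hS0 (fintype.subsetP GS i iG)); exact: pterm_mono.
Qed.

Lemma fine_payG (G : {set A}) : G \subset S0 -> fine (pay f c G) <= \sum_(i in G) t i.
Proof.
move=> GS; have := payG GS; have := pay_ge0 G.
by case: (pay f c G).
Qed.

Hypothesis hf0 : forall S, 0 <= f S.

Lemma profit_lb (G : {set A}) : G \subset S0 ->
  (1 - \sum_(i in S0) t i) * f G <= profit f c G.
Proof.
move=> GS; rewrite /profit; apply: ler_wpM2r => //.
rewrite lerD2l lerN2; apply: le_trans (fine_payG GS) _.
apply: sum_sub_le => //; exact: t_ge0.
Qed.

Lemma profit_le_max (G : {set A}) (bb : R) : (pay f c G <= bb%:E)%E ->
  profit f c G <= max_profit f c bb.
Proof. by move=> h; rewrite /max_profit; exact: (le_bigmax_cond _ _ h). Qed.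

Lemma Kbound (G : {set A}) (bb : R) : G \subset S0 -> (pay f c G <= bb%:E)%E ->
  (1 - \sum_(i in S0) t i) * f G <= max_profit f c bb.
Proof. by move=> GS h; apply: le_trans (profit_lb GS) (profit_le_max h). Qed.


Variable bb : R.
Hypothesis hsing : forall i, (pay f c [set i] <= bb%:E)%E.

Definition grpset (S : {set A}) (g : A -> nat) (j : nat) := [set x in S | g x == j].
Definition ssum (S : {set A}) (g : A -> nat) (j : nat) := \sum_(x in grpset S g j) t x.

Definition Inv (S : {set A}) (m : nat) (g : A -> nat) :=
 [/\ S \subset S0, (0 < m)%N, (m <= #|S|)%N, (forall x, x \in S -> (g x < m)%N) &
 [/\ (forall j, (j < m)%N -> (pay f c (grpset S g j) <= bb%:E)%E),
  (forall j k, (j < m)%N -> (k < m)%N -> j != k -> bb < ssum S g j + ssum S g k) &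
  f S <= \sum_(j < m) f (grpset S g j)]].

Lemma Inv_base i : i \in S0 -> Inv [set i] 1 (fun _ => 0%N).
Proof.
move=> iS; have e : grpset [set i] (fun _ => 0%N) 0 = [set i].
  by apply/setP => x; rewrite !inE eqxx andbT.
split => //; first by rewrite sub1set.
  by rewrite cards1.
split.
- by move=> j; rewrite ltnS leqn0 => /eqP ->; rewrite e.
- by move=> j k; rewrite !ltnS !leqn0 => /eqP -> /eqP ->; rewrite eqxx.
- by rewrite big_ord1 e.
Qed.

Lemma submod_step (S G : {set A}) i : i \notin S -> G \subset S ->
  f (i |: S) - f S <= f (i |: G) - f G.
Proof.
move=> iS GS.
have iG : i \notin G by apply: contra iS; exact: (fintype.subsetP GS).
have h := @hsub (i |: G) (i |: S) i (setUS _ GS) (setU11 _ _).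
by move: h; rewrite /marg !setU1K.
Qed.


Lemma grpset_sub S g k : grpset S g k \subset S.
Proof. by apply/subsetP => x; rewrite inE => /andP[]. Qed.

Lemma ssum_mono (S S' : {set A}) g g' k : grpset S g k \subset grpset S' g' k ->
  ssum S g k <= ssum S' g' k.
Proof. move=> h; apply: sum_sub_le => //; exact: t_ge0. Qed.

Lemma Inv_step S m g i : Inv S m g -> i \in S0 -> i \notin S ->
  exists m' g', Inv (i |: S) m' g'.
Proof.
case=> SS0 m0 mS gS [hpay hpw hf] iS0 iS.
have SS0' : i |: S \subset S0 by rewrite subUset sub1set iS0 SS0.
have cS : #|i |: S| = #|S|.+1 by rewrite cardsU1 iS.
have xneq : forall x, x \in S -> (x == i) = false.
  by move=> x xS; apply/eqP => e; move: iS; rewrite -e xS.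
case: (pselect (exists j, (j < m)%N /\ ssum S g j + t i <= bb)) => [[j [jm hj]]|hn].
- pose g' x := if x == i then j else g x.
  exists m, g'.
  have eG : forall k, grpset (i |: S) g' k = if k == j then i |: grpset S g k else grpset S g k.
    move=> k; apply/setP => x; rewrite /g' /grpset.
    case: (eqVneq k j) => [->|kj]; rewrite !inE.
      by case: (eqVneq x i) => [->|xi] //=; rewrite eqxx.
    case: (eqVneq x i) => [->|xi] /=; last by [].
    by rewrite (negbTE iS) eq_sym (negbTE kj).
  have hsubk : forall k, grpset S g k \subset grpset (i |: S) g' k.
    move=> k; rewrite eG; case: ifP => _ //; exact: subsetUr.
  have iGj : i \notin grpset S g j by rewrite inE (negbTE iS).
  split => //; first by rewrite cS ltnW // ltnS.
    move=> x; rewrite !inE /g'; case: (eqVneq x i) => [_ _|xi /= xS]; [exact: jm | by apply: gS].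
  split.
  + move=> k km; rewrite eG; case: (eqVneq k j) => [->|kj]; last exact: hpay.
    apply: le_trans (payG _) _.
      by rewrite subUset sub1set iS0 (subset_trans (grpset_sub _ _ _) SS0).
    by rewrite lee_fin big_setU1 //= addrC.
  + move=> j' k jm' km jk; apply: lt_le_trans (hpw _ _ jm' km jk) _.
    by apply: lerD; apply: ssum_mono.
  + have hs := submod_step iS (grpset_sub S g j).
    rewrite (bigD1 (Ordinal jm)) //= eG eqxx.
    have e2 : \sum_(k < m | k != Ordinal jm) f (grpset (i |: S) g' k) =
              \sum_(k < m | k != Ordinal jm) f (grpset S g k).
      apply: eq_bigr => k kj; rewrite eG; case: eqP => // ekj.
      by move: kj; rewrite -val_eqE /= ekj eqxx.
    rewrite e2.
    move: hf; rewrite (bigD1 (Ordinal jm)) //= => hf.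
    lra.
- pose g' x := if x == i then m else g x.
  exists m.+1, g'.
  have hn' : forall j, (j < m)%N -> bb < ssum S g j + t i.
    move=> j jm; rewrite ltNge; apply/negP => h; apply: hn; by exists j.
  have eGk : forall k, (k < m)%N -> grpset (i |: S) g' k = grpset S g k.
    move=> k km; apply/setP => x; rewrite !inE /g'; case: (eqVneq x i) => [->|xi] /=.
      by rewrite (negbTE iS) eq_sym (ltn_eqF km).
    by [].
  have eGm : grpset (i |: S) g' m = [set i].
    apply/setP => x; rewrite !inE /g'; case: (eqVneq x i) => [->|xi] /=; first by rewrite eqxx.
    apply/negbTE; apply/negP => /andP[xS /eqP e]; have := gS x xS; by rewrite e ltnn.
  have sm : ssum (i |: S) g' m = t i by rewrite /ssum eGm big_set1.
  have sk : forall k, (k < m)%N -> ssum (i |: S) g' k = ssum S g k.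
    by move=> k km; rewrite /ssum eGk.
  split => //; first by rewrite cS.
    move=> x; rewrite !inE /g'; case: (eqVneq x i) => [_ _|xi /= xS] //.
    by rewrite ltnW // ltnS; apply: gS.
  split.
  + move=> j; rewrite ltnS leq_eqVlt => /orP[/eqP->|jm].
      by rewrite eGm.
    by rewrite eGk //; apply: hpay.
  + move=> j k; rewrite !ltnS => jm km jk.
    case: (ltnP j m) => jm'; case: (ltnP k m) => km'.
    * by rewrite !sk //; apply: hpw.
    * have ekm : k = m by apply/eqP; rewrite eqn_leq km km'.
      by rewrite ekm sm sk //; apply: hn'.
    * have ejm : j = m by apply/eqP; rewrite eqn_leq jm jm'.
      by rewrite ejm sm sk // addrC; apply: hn'.
    * have ejm : j = m by apply/eqP; rewrite eqn_leq jm jm'.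
      have ekm : k = m by apply/eqP; rewrite eqn_leq km km'.
      by move: jk; rewrite ejm ekm eqxx.
  + rewrite big_ord_recr /= eGm.
    rewrite (eq_bigr (fun k : 'I_m => f (grpset S g k))); last first.
      by move=> k _; rewrite eGk.
    have h := @hsub [set i] (i |: S) i.
    rewrite /marg setU1K // in h.
    have h2 : [set i] :\ i = set0 by rewrite setDv.
    rewrite h2 in h; have := hf0 set0.
    have : [set i] \subset i |: S by rewrite sub1set setU11.
    move/h; rewrite set11 => /(_ isT) h3 h4.
    apply: le_trans (lerD hf (lexx (f [set i]))).
    move: h3 h4; generalize (f (i |: S)) (f S) (f [set i]) (f set0).
    move=> a1 a2 a3 a4 h3 h4; lra.
Qed.


Lemma Inv_seq (s : seq A) : uniq s -> s != [::] -> {subset s <= S0} ->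
  exists m g, Inv [set x in s] m g.
Proof.
elim: s => [//|x s IH] /= /andP[xs us] _ sub.
case: s IH xs us sub => [|y s] IH xs us sub.
  exists 1%N, (fun _ => 0%N).
  have -> : [set z in [:: x]] = [set x] by apply/setP => z; rewrite !inE.
  by apply: Inv_base; apply: sub; rewrite mem_head.
have [m [g h]] : exists m g, Inv [set z in y :: s] m g.
  by apply: IH => // z zs; apply: sub; rewrite inE zs orbT.
have -> : [set z in x :: y :: s] = x |: [set z in y :: s] by apply/setP => z; rewrite !inE.
apply: Inv_step h (sub x (mem_head _ _)) _; by rewrite inE.
Qed.

Lemma Inv_S0 : S0 != set0 -> exists m g, Inv S0 m g.
Proof.
move=> ne; have := @Inv_seq (enum S0) (enum_uniq _).
rewrite set_enum; apply.
  by apply/negP => /eqP e; move: ne; rewrite -(set_enum S0) e; apply/negP/negPn/eqP/setP => z; rewrite !inE.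
by move=> z; rewrite mem_enum.
Qed.

Lemma sum_part (S : {set A}) m g : (forall x, x \in S -> (g x < m)%N) ->
  \sum_(x in S) t x = \sum_(j < m) ssum S g j.
Proof.
move=> gS.
have e1 : forall j : 'I_m, ssum S g j = \sum_(x in S) (if g x == j then t x else 0).
  move=> j; rewrite /ssum /grpset big_mkcond [RHS]big_mkcond; apply: eq_bigr => x _.
  by rewrite inE; case: (x \in S).
rewrite (eq_bigr _ (fun j _ => e1 j)) exchange_big /=.
apply: eq_bigr => x xS.
rewrite (bigD1 (Ordinal (gS x xS))) //= eqxx big1 ?addr0 // => j jx.
case: eqP => // e; move: jx; by rewrite -val_eqE /= e eqxx.
Qed.


Lemma Mb_ge0 (x : R) : 0 <= max_profit f c x.
Proof. exact: bigmax_ge_id. Qed.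

Lemma pay0 : pay f c set0 = 0%E.
Proof. by rewrite /pay big_set0. Qed.

Lemma profit_S0 (n : nat) : (#|A| <= n)%N -> (1 <= n)%N -> 0 < bb -> bb < B0 ->
  profit f c S0 <= (Order.min (Num.ceil (2 * B0 / bb) - 1) n%:Z)%:~R * max_profit f c bb.
Proof.
move=> An n1 b0 bB.
set m0 := Order.min _ _.
have hMb := Mb_ge0 bb.
have hm0 : forall m : nat, (m <= n)%N -> m%:R < 2 * B0 / bb ->
    m%:R * max_profit f c bb <= m0%:~R * max_profit f c bb.
  move=> m mn mB; apply: ler_wpM2r => //.
  have : (m%:Z <= m0)%R.
    rewrite le_min lez_nat mn andbT.
    by rewrite -ltzD1 subrK ceil_gt_int.
  rewrite -(ler_int R) => h; apply: le_trans h. exact: lexx.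
case: (eqVneq S0 set0) => [e|ne].
  rewrite e /profit pay0 /= subr0 mul1r.
  have h1 : f set0 <= max_profit f c bb.
    have := @profit_le_max set0 bb; rewrite pay0 lee_fin /profit pay0 /= subr0 mul1r.
    by apply; apply: ltW.
  apply: le_trans h1 _; rewrite -[X in X <= _]mul1r; apply: le_trans (hm0 1%N n1 _).
    by rewrite mul1r.
  have b0B := lt_trans b0 bB.
  by rewrite ltr_pdivlMr // mul1r; apply: lt_le_trans bB _; rewrite ler_peMl ?ler1n // ltW.
have [m [g [SS0 m0p mS gS [hpay hpw hf]]]] := Inv_S0 ne.
set T := \sum_(i in S0) t i.
have hT : profit f c S0 = (1 - T) * f S0 by rewrite /profit payS0.
have TB : T <= B0 by have := hS0; rewrite payS0 lee_fin.
rewrite hT; case: (lerP (1 - T) 0) => hT0.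
  apply: le_trans (_ : 0 <= _); first by apply: mulr_le0_ge0.
  apply: mulr_ge0 => //; rewrite ler0z le_min; apply/andP; split; last by [].
  by rewrite subr_ge0 -gtz0_ge1 ceil_gt0 divr_gt0 // mulr_gt0 // (lt_trans b0 bB).
have h1 : (1 - T) * f S0 <= m%:R * max_profit f c bb.
  apply: le_trans (ler_wpM2l (ltW hT0) hf) _.
  rewrite mulr_sumr.
  apply: (@le_trans _ _ (\sum_(j < m) max_profit f c bb)).
    apply: ler_sum => j _; apply: Kbound; [exact: subset_trans (grpset_sub _ _ _) SS0 | exact: hpay].
  by rewrite sumr_const card_ord mulr_natl.
apply: le_trans h1 (hm0 m _ _).
  exact: leq_trans mS (leq_trans (max_card _) An).
rewrite ltr_pdivlMr //.
case: (ltnP m 2) => m2.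
  have -> : m = 1%N by apply/eqP; rewrite eqn_leq -ltnS m2 m0p.
  rewrite mul1r; lra.
have := count_pw m2 hpw; rewrite -sum_part // -/T => h.
apply: lt_le_trans h _; lra.
Qed.
End UB.


Section Additive.
Variables (R : realType) (A : finType) (w r : A -> R).
Hypothesis wpos : forall i, 0 < w i.
Hypothesis rpos : forall i, 0 <= r i.

Definition fadd (S : {set A}) := \sum_(i in S) w i.
Definition cadd (i : A) := r i * w i.

Lemma marg_add (S : {set A}) i : i \in S -> marg fadd S i = w i.
Proof. by move=> iS; rewrite /marg /fadd (big_setD1 i iS) /= addrK. Qed.

Lemma pterm_add (S : {set A}) i : i \in S -> pterm fadd cadd S i = (r i)%:E.
Proof.
move=> iS; rewrite /pterm marg_add // (gt_eqF (wpos i)) /cadd mulfK //.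
by rewrite (gt_eqF (wpos i)).
Qed.

Lemma pay_add (S : {set A}) : pay fadd cadd S = (\sum_(i in S) r i)%:E.
Proof. by rewrite /pay -sumEFin; apply: eq_bigr => i iS; rewrite pterm_add. Qed.

Lemma profit_add (S : {set A}) : profit fadd cadd S = (1 - \sum_(i in S) r i) * fadd S.
Proof. by rewrite /profit pay_add. Qed.

Lemma valid_add (n : nat) (b : R) : (#|A| <= n)%N -> \sum_i w i <= 1 ->
  (forall i, r i <= b) -> valid_instance n b fadd cadd.
Proof.
move=> An w1 rb; split => //; split.
- move=> S; rewrite /fadd sumr_ge0 /=; last by move=> i _; exact: ltW.
  apply: le_trans w1; have -> : \sum_i w i = \sum_(i in [set: A]) w i by apply: eq_bigl => i; rewrite inE.
  apply: sum_sub_le; [exact: subsetT | by move=> i; exact: ltW].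
- move=> S T ST; apply: sum_sub_le => // i; exact: ltW.
- by move=> S S' i SS' iS; rewrite !marg_add // (fintype.subsetP SS').
- by move=> i; rewrite /cadd mulr_ge0 // ltW.
- by move=> i; rewrite pay_add big_set1 lee_fin.
Qed.

End Additive.


Lemma two_q (R : realType) (m b e : R) : 0 <= m -> 0 < b -> 0 < e ->
  (m + 1 + 1) * (b / 2 + e) <= b -> False.
Proof. move=> hm b0 e0 h; nra. Qed.

Lemma kinst (R : realType) (k n : nat) (b B e : R) : (0 < k)%N -> (k <= n)%N -> 0 < b -> b < 1 ->
  0 < e -> e <= b / 2 -> k%:R * (b / 2 + e) <= B ->
  exists (A : finType) (f : {set A} -> R) (c : A -> R), valid_instance n b f c /\
    (1 - k%:R * (b / 2 + e)) / ((1 - (b / 2 + e)) / k%:R) <= max_profit f c B / max_profit f c b.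
Proof.
move=> k0 kn b0 b1 e0 eb kB.
set q := b / 2 + e.
have kR : 0 < k%:R :> R by rewrite ltr0n.
have q0 : 0 <= q by rewrite /q; lra.
have qb : q <= b by rewrite /q; lra.
have hq1 : 0 <= 1 - q by lra.
have wpos : forall i : 'I_k, 0 < k%:R^-1 :> R by move=> _; rewrite invr_gt0.
have rpos : forall i : 'I_k, 0 <= q by [].
exists ('I_k : finType), (fadd (fun _ : 'I_k => k%:R^-1)), (cadd (fun _ : 'I_k => k%:R^-1) (fun _ => q)).
split.
  apply: valid_add => //; first by rewrite card_ord.
  by rewrite sumr_const card_ord -[_ *+ _]mulr_natl mulfV // gt_eqF.
have hMb : max_profit (fadd (fun _ : 'I_k => k%:R^-1)) (cadd (fun _ : 'I_k => k%:R^-1) (fun _ => q)) b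
           = (1 - q) / k%:R.
  apply/eqP; rewrite eq_le; apply/andP; split.
    apply: bigmax_le; first exact: divr_ge0 hq1 (ltW kR).
    move=> S; rewrite pay_add // profit_add // /fadd !sumr_const lee_fin.
    rewrite -[q *+ _]mulr_natl -[_^-1 *+ _]mulr_natl.
    case: #|S| => [|[|m]] /= hS.
    - rewrite mul0r subr0 mul1r mul0r; exact: divr_ge0 hq1 (ltW kR).
    - by rewrite !mul1r.
    - exfalso; move: hS; rewrite -natr1 -natr1.
      have : 0 <= m%:R :> R by [].
      move=> hm hS; exact: (two_q hm b0 e0 hS).
  apply: (@le_trans _ _ (profit (fadd (fun _ : 'I_k => k%:R^-1)) (cadd (fun _ : 'I_k => k%:R^-1) (fun _ => q)) [set Ordinal k0])).
    by rewrite profit_add // /fadd !big_set1.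
  by apply: profit_le_max; rewrite pay_add // big_set1 lee_fin.
rewrite hMb; apply: ler_wpM2r; first by rewrite invr_ge0 divr_ge0 // ltW.
apply: (@le_trans _ _ (profit (fadd (fun _ : 'I_k => k%:R^-1)) (cadd (fun _ : 'I_k => k%:R^-1) (fun _ => q)) setT)).
  rewrite profit_add // /fadd !sumr_const cardsT card_ord.
  by rewrite -[_^-1 *+ _]mulr_natl -[q *+ _]mulr_natl mulfV ?gt_eqF // mulr1.
by apply: profit_le_max; rewrite pay_add // sumr_const cardsT card_ord lee_fin -mulr_natl.
Qed.


Lemma sum_boolS (R : realType) (S : {set bool}) (F : bool -> R) :
  \sum_(i in S) F i = (if true \in S then F true else 0) + (if false \in S then F false else 0).
Proof. by rewrite big_mkcond big_bool. Qed.

Lemma binst (R : realType) (n : nat) (b B d : R) : (2 <= n)%N -> 0 < b -> b < 1 ->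
  0 < d -> d <= b -> b + d <= B ->
  exists (A : finType) (f : {set A} -> R) (c : A -> R), valid_instance n b f c /\
    (1 - b - d) / ((1 - b) / (2 - b)) <= max_profit f c B / max_profit f c b.
Proof.
move=> n2 b0 b1 d0 db bB.
set v := (2 - b)^-1.
set u := (1 - b) / (2 - b).
have hv : 0 < v by rewrite invr_gt0; lra.
have hu : u = (1 - b) * v by [].
have huv : u + v = 1 by rewrite /u /v; field; lra.
have hu0 : 0 < u by rewrite hu mulr_gt0 //; lra.
pose w := fun x : bool => if x then u else v.
pose r := fun x : bool => if x then d else b.
have wpos : forall i, 0 < w i by case.
have rpos : forall i, 0 <= r i by case => /=; apply: ltW.
exists (bool : finType), (fadd w), (cadd w r).
split.
  apply: valid_add => //; first by rewrite card_bool.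
    by rewrite big_bool /= huv.
  by case => //=.
have hMb : max_profit (fadd w) (cadd w r) b = u.
  apply/eqP; rewrite eq_le; apply/andP; split.
    apply: bigmax_le; first exact: ltW.
    move=> S; rewrite pay_add // profit_add // /fadd !sum_boolS lee_fin /w /r.
    case: (true \in S); case: (false \in S) => /= hS.
    - exfalso; move: hS; lra.
    - have : (1 - (d + 0)) * (u + 0) <= u by rewrite addr0 addr0; nra.
      by [].
    - by rewrite !add0r hu.
    - by rewrite !addr0 subr0 mul1r; exact: ltW.
  apply: (@le_trans _ _ (profit (fadd w) (cadd w r) [set false])).
    by rewrite profit_add // /fadd !big_set1 /w /r /= hu.
  by apply: profit_le_max; rewrite pay_add // big_set1 lee_fin.
rewrite hMb; apply: ler_wpM2r; first by rewrite invr_ge0 ltW.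
apply: (@le_trans _ _ (profit (fadd w) (cadd w r) setT)).
  rewrite profit_add // /fadd !sum_boolS !inE /w /r /= huv mulr1.
  have -> : 1 - (d + b) = 1 - b - d by ring.
  by [].
by apply: profit_le_max; rewrite pay_add // sum_boolS !inE /r /= lee_fin; lra.
Qed.


Lemma ex_small (R : realType) (a1 a2 a3 a4 : R) : 0 < a1 -> 0 < a2 -> 0 < a3 -> 0 < a4 ->
  exists e : R, [/\ 0 < e, e <= a1, e <= a2, e <= a3 & e <= a4].
Proof.
move=> h1 h2 h3 h4; exists (Num.min (Num.min a1 a2) (Num.min a3 a4)); split.
- by rewrite !lt_min h1 h2 h3 h4.
- by rewrite !ge_min lexx.
- by rewrite !ge_min lexx !orbT.
- by rewrite !ge_min lexx !orbT.
- by rewrite !ge_min lexx !orbT.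
Qed.

Lemma approx (R : realType) (S : set \bar R) (x : R) :
  (forall y, y < x -> exists2 z, S z & (y%:E <= z)%E) -> (x%:E <= ereal_sup S)%E.
Proof.
move=> h; have ub := @ereal_sup_ubound R S.
case E: (ereal_sup S) => [s| |]; last first.
- have [z Sz yz] := h (x - 1) ltac:(lra).
  have := ub z Sz; rewrite E leeNy_eq => /eqP ez; move: yz; by rewrite ez.
- exact: leey.
- rewrite lee_fin leNgt; apply/negP => sx.
  have [z Sz yz] := h ((s + x) / 2) ltac:(lra).
  have := le_trans yz (ub z Sz); rewrite E lee_fin; lra.
Qed.

Lemma maxE_le (R : realType) (a c : R) (s : \bar R) : (a%:E <= s)%E -> (c%:E <= s)%E ->
  ((Num.max a c)%:E <= s)%E.
Proof. by move=> h1 h2; case: (leP a c) => _. Qed.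

Lemma ar1 (R : realType) (b y d : R) : 0 < b -> b < 1 -> y < 2 - b ->
  d <= (2 - b - y) * (1 - b) / (2 - b) -> y <= (1 - b - d) / ((1 - b) / (2 - b)).
Proof.
move=> b0 b1 y2 hd.
have hu : 0 < (1 - b) / (2 - b) by apply: divr_gt0; lra.
rewrite ler_pdivlMr //.
move: hu hd; set u := (1 - b) / (2 - b) => hu hd.
have e : u * (2 - b) = 1 - b by rewrite /u mulfVK //; apply: lt0r_neq0; lra.
rewrite -mulrA -/u in hd.
nra.
Qed.

Lemma ar2 (R : realType) (K b e y X : R) : 1 <= K -> 0 < b -> b < 1 -> 0 < e -> e <= b / 2 ->
  K * e <= 1 - K * b / 2 -> K * K * e <= (X - y) * (1 - b / 2) ->
  X * (1 - b / 2) = K * (1 - K * b / 2) ->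
  y <= (1 - K * (b / 2 + e)) / ((1 - (b / 2 + e)) / K).
Proof.
move=> K1 b0 b1 e0 eb h1 h2 hX.
have K0 : 0 < K by lra.
have D0 : 0 < 1 - (b / 2 + e) by lra.
rewrite ler_pdivlMr ?divr_gt0 // mulrA ler_pdivrMr //.
have hK : 0 <= K * (1 - K * (b / 2 + e)) by apply: mulr_ge0; lra.
case: (lerP 0 y) => hy.
  nra.
nra.
Qed.

Lemma m0_ge1 (R : realType) (n : nat) (b B : R) : 0 < b -> b < B -> (1 <= n)%N ->
  (1 <= Order.min (Num.ceil (2 * B / b) - 1) n%:Z)%R.
Proof.
move=> b0 bB n1; rewrite le_min lez_nat n1 andbT.
rewrite -ltzD1 subrK ceil_gt_int.
have : 1 < B / b by rewrite ltr_pdivlMr // mul1r.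
rewrite -mulrA; lra.
Qed.

Lemma pof_ub (R : realType) (n : nat) (b B : R) : 0 < b -> b < B -> (1 <= n)%N ->
  (pof_profit_submodular n b B <= (Order.min (Num.ceil (2 * B / b) - 1) n%:Z)%:~R%:E)%E.
Proof.
move=> b0 bB n1.
have m01 := m0_ge1 b0 bB n1.
have m00 : 0 <= (Order.min (Num.ceil (2 * B / b) - 1) n%:Z)%:~R :> R.
  by rewrite ler0z; apply: le_trans m01.
apply: ge_ereal_sup => r [A [f [c [[An [hf hmono hsub hc hsing]] ->]]]].
rewrite lee_fin.
have Mb0 := Mb_ge0 f c b.
case: (eqVneq (max_profit f c b) 0) => [->|ne].
  by rewrite invr0 mulr0.
have Mbp : 0 < max_profit f c b by rewrite lt_neqAle eq_sym ne.
rewrite ler_pdivrMr //.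
apply: bigmax_le; first exact: mulr_ge0.
move=> S hS.
have hf0 : forall S, 0 <= f S by move=> S'; case/andP: (hf S').
exact: (profit_S0 hmono hsub hc hS hf0 hsing An n1 b0 bB).
Qed.

Unset Implicit Arguments.

Theorem mainTheorem16 (R : realType) (b B : R) (n : nat) :
  0 < b -> b < B -> B <= 1 -> (2 <= n)%N ->
  let k : int := Order.min (Num.floor (b^-1 + 2^-1))
                   (Order.min (Num.ceil (2 * B / b) - 1) (n%:Z)) in
  ((Num.max (2 - b) (k%:~R * (2 - k%:~R * b) / (2 - b)))%:E
     <= pof_profit_submodular n b B)%E /\
  (pof_profit_submodular n b B
     <= (Order.min (Num.ceil (2 * B / b) - 1) (n%:Z))%:~R%:E)%E.
Proof.
move=> b0 bB B1 n2 k.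
split; last by apply: pof_ub => //; exact: ltnW.
have b1 : b < 1 by lra.
have X1 : ((2 - b)%:E <= pof_profit_submodular n b B)%E.
  apply: approx => y hy.
  have p3 : 0 < (2 - b - y) * (1 - b) / (2 - b) by apply: divr_gt0; [apply: mulr_gt0|]; lra.
  have [d [d0 db dB dz _]] := @ex_small R b (B - b) _ 1 b0 ltac:(lra) p3 ltr01.
  have bdB : b + d <= B by lra.
  have [A [f [c [hv hr]]]] := binst n2 b0 b1 d0 db bdB.
  exists (max_profit f c B / max_profit f c b)%:E; first by exists A, f, c; split.
  by rewrite lee_fin; apply: le_trans hr; apply: ar1.
have hk1 : (1 <= k)%R.
  rewrite /k !le_min; apply/andP; split; last first.
    by have := m0_ge1 b0 bB (ltnW n2); rewrite le_min.
  rewrite floor_ge_int.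
  have e1 : ((1:int)%:~R : R) = 1 by [].
  rewrite e1.
  have : 1 < b^-1 by rewrite invf_gt1.
  have : (0 : R) < 2^-1 by rewrite invr_gt0.
  move=> h1 h2; lra.
have hkc : (k <= Num.ceil (2 * B / b) - 1)%R by rewrite /k !ge_min lexx !orbT.
have hkn : (k <= n%:Z)%R by rewrite /k !ge_min lexx !orbT.
have ekn : k = (`|k|%N)%:Z by rewrite gez0_abs // (le_trans _ hk1).
move: hk1 hkc hkn; rewrite ekn; set kn := `|k|%N => hk1 hkc hkn.
have eK : ((kn%:Z)%:~R : R) = kn%:R by [].
rewrite eK.
have kn1 : (0 < kn)%N by exact: hk1.
have knn : (kn <= n)%N by exact: hkn.
have KB : kn%:R < 2 * B / b.
  by rewrite -eK -ceil_gt_int; move: hkc; rewrite -ltzD1 subrK.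
set K := kn%:R in KB *.
have K1 : 1 <= K by rewrite /K ler1n.
set X2 := K * (2 - K * b) / (2 - b).
have hX2 : (X2%:E <= pof_profit_submodular n b B)%E.
  case: (lerP (2 - K * b) 0) => h.
    apply: le_trans X1; rewrite lee_fin /X2 ler_pdivrMr; last by lra.
    nra.
  apply: approx => y hy.
  have K0 : 0 < K by lra.
  have hD : 0 < 1 - b / 2 by lra.
  have KbB : K * b < 2 * B by rewrite -ltr_pdivlMr.
  have a1p : 0 < b / 2 by lra.
  have a2p : 0 < (B - K * b / 2) / K by apply: divr_gt0 => //; lra.
  have a3p : 0 < (1 - K * b / 2) / K by apply: divr_gt0 => //; lra.
  have a4p : 0 < (X2 - y) * (1 - b / 2) / (K * K).
    by apply: divr_gt0; [apply: mulr_gt0; lra | apply: mulr_gt0].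
  have [e [e0 e1 e2 e3 e4]] := ex_small a1p a2p a3p a4p.
  rewrite ler_pdivlMr // in e2; rewrite ler_pdivlMr // in e3.
  rewrite ler_pdivlMr ?mulr_gt0 // in e4.
  have kB : K * (b / 2 + e) <= B by nra.
  have [A [f [c [hv hr]]]] := kinst kn1 knn b0 b1 e0 e1 kB.
  exists (max_profit f c B / max_profit f c b)%:E; first by exists A, f, c; split.
  rewrite lee_fin; apply: le_trans hr; apply: (ar2 (X := X2)) => //.
  - by rewrite mulrC.
  - by rewrite mulrC.
  - by rewrite /X2; field; lra.
exact: maxE_le.
Qed.
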